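(* Let $H$ be a finite dimensional quasi-Hopf algebra over a field $k$ with nonzero left integral $t$. Let $A$ be a left $H$-module algebra and $B=A^H$. The following statements are equivalent: 1. the Morita map $(-,-):A\otimes_{A\#H}A\to B$, $(a,b)=t\cdot[(p_L^1\cdot a)(p_L^2\cdot b)]$, is surjective; 2. there is a total integral for $A$; 3. $A$ has an element of trace one, i.e. $a\in A$ with $t\cdot a=1_A$; 4. $A$ is an injective left $H$-module; 5. every left $(H,A)$-Hopf module is injective as an $H$-module.
   Context: Let $H$ be a quasi-Hopf algebra over a field $k$, with data $(H,\Delta,\varepsilon,\phi,S,\alpha,\beta)$, written $\Delta(h)=h_1\otimes h_2$, $\phi=X^1\otimes X^2\otimes X^3$, $\phi^{-1}=x^1\otimes x^2\otimes x^3$ (summation suppressed). The axioms are: - $\phi(\Delta\otimes I)\Delta(h)\phi^{-1}=(I\otimes\Delta)\Delta(h)$; - $(I\otimes\varepsilon)\Delta=(\varepsilon\otimes I)\Delta=I$; - $(I\otimes I\otimes\Delta)(\phi)(\Delta\otimes I\otimes I)(\phi)=(1\otimes\phi)(I\otimes\Delta\otimes I)(\phi)(\phi\otimes1)$; - $(I\otimes\varepsilon\otimes I)(\phi)=1\otimes1$; - $S$ is an anti-algebra morphism, with $S(h_1)\alpha h_2=\varepsilon(h)\alpha$ and $h_1\beta S(h_2)=\varepsilon(h)\beta$; - $X^1\beta S(X^2)\alpha X^3=1$ and $S(x^1)\alpha x^2\beta S(x^3)=1$; - $\varepsilon(\alpha)=\varepsilon(\beta)=1$. For finite dimensional $H$,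 $S$ is bijective. Define $p_L=p_L^1\otimes p_L^2=X^2S^{-1}(X^1\beta)\otimes X^3$. A left integral is $t\in H$ with $ht=\varepsilon(h)t$ for all $h$. A left $H$-module algebra is a left $H$-module $A$ with a bilinear, not necessarily associative, multiplication and a unit $1_A$ satisfying: - $(ab)c=(X^1\cdot a)[(X^2\cdot b)(X^3\cdot c)]$; - $h\cdot(ab)=(h_1\cdot a)(h_2\cdot b)$; - $h\cdot1_A=\varepsilon(h)1_A$. $B=A^H=\{a\mid h\cdot a=\varepsilon(h)a\ \forall h\}$. The smash product $A\#H=A\otimes H$ has multiplication $(a\#h)(b\#g)=(x^1\cdot a)(x^2h_1\cdot b)\#x^3h_2g$. A total integral for $A$ is a left $H$-linear $\Phi:H^*\to A$ with $\Phi(\varepsilon)=1_A$, where $(h\rightharpoonup h^* )(g)=h^*(gh)$. A left $(H,A)$-Hopf module is a left $H$-module $M$ with $A\otimes M\to M$, $a\otimes m\mapsto am$, such that: - $(ab)m=(X^1\cdot a)[(X^2\cdot b)(X^3m)]$; - $h(am)=(h_1\cdot a)(h_2m)$; - $1_Am=m$. *)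

(* Defs.v *)
From HB Require Import structures.
From mathcomp Require Import all_boot all_order all_algebra all_field.
Set Implicit Arguments. Unset Strict Implicit. Unset Printing Implicit Defensive.
Import GRing.Theory.
Local Open Scope ring_scope.

(* Elements of H^{(x)n} (n = 2,3,4) are represented by finite formal sums of
   pure tensors: a 2-tensor sum_i a_i (x) b_i is a list [:: (a_i, b_i); ...],
   a 3-tensor uses (x, y, z) = ((x, y), z), a 4-tensor (((x,y),z),w).
   Two formal sums represent the same tensor iff they agree on all products of
   linear functionals (H is a vector space over a field). *)
Section Tensors.
Variables (k : fieldType) (H : falgType k).

Definition teq2 (s u : seq (H * H)) : Prop :=
  forall f1 f2 : {linear H -> k^o},
    \sum_(p <- s) (f1 p.1 * f2 p.2) = \sum_(p <- u) (f1 p.1 * f2 p.2).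
Definition teq3 (s u : seq (H * H * H)) : Prop :=
  forall f1 f2 f3 : {linear H -> k^o},
    \sum_(p <- s) (f1 p.1.1 * f2 p.1.2 * f3 p.2)
    = \sum_(p <- u) (f1 p.1.1 * f2 p.1.2 * f3 p.2).
Definition teq4 (s u : seq (H * H * H * H)) : Prop :=
  forall f1 f2 f3 f4 : {linear H -> k^o},
    \sum_(p <- s) (f1 p.1.1.1 * f2 p.1.1.2 * f3 p.1.2 * f4 p.2)
    = \sum_(p <- u) (f1 p.1.1.1 * f2 p.1.1.2 * f3 p.1.2 * f4 p.2).

Definition tmul2 (s u : seq (H * H)) : seq (H * H) :=
  [seq (p.1 * q.1, p.2 * q.2) | p <- s, q <- u].
Definition tmul3 (s u : seq (H * H * H)) : seq (H * H * H) :=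
  [seq (p.1.1 * q.1.1, p.1.2 * q.1.2, p.2 * q.2) | p <- s, q <- u].
Definition tmul4 (s u : seq (H * H * H * H)) : seq (H * H * H * H) :=
  [seq (p.1.1.1 * q.1.1.1, p.1.1.2 * q.1.1.2, p.1.2 * q.1.2, p.2 * q.2)
  | p <- s, q <- u].

Variable Delta : H -> seq (H * H).

Definition DI2 (s : seq (H * H)) : seq (H * H * H) :=
  flatten [seq [seq (q.1, q.2, p.2) | q <- Delta p.1] | p <- s].
Definition ID2 (s : seq (H * H)) : seq (H * H * H) :=
  flatten [seq [seq (p.1, q.1, q.2) | q <- Delta p.2] | p <- s].
Definition IID3 (s : seq (H * H * H)) : seq (H * H * H * H) :=
  flatten [seq [seq (p.1.1, p.1.2, q.1, q.2) | q <- Delta p.2] | p <- s].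
Definition DII3 (s : seq (H * H * H)) : seq (H * H * H * H) :=
  flatten [seq [seq (q.1, q.2, p.1.2, p.2) | q <- Delta p.1.1] | p <- s].
Definition IDI3 (s : seq (H * H * H)) : seq (H * H * H * H) :=
  flatten [seq [seq (p.1.1, q.1, q.2, p.2) | q <- Delta p.1.2] | p <- s].

Definition quasiHopf (eps : H -> k) (phi phiinv : seq (H * H * H))
    (S : H -> H) (alpha beta : H) : Prop :=
  [/\
   (forall (c : k) (h g : H),
      teq2 (Delta (c *: h + g)) ([seq (c *: p.1, p.2) | p <- Delta h] ++ Delta g))
   /\ (forall h g, teq2 (Delta (h * g)) (tmul2 (Delta h) (Delta g)))
   /\ teq2 (Delta 1) [:: (1, 1)],
   (forall (c : k) (h g : H), eps (c *: h + g) = c * eps h + eps g)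
   /\ (forall h g, eps (h * g) = eps h * eps g) /\ eps 1 = 1,
   teq3 (tmul3 phi phiinv) [:: (1, 1, 1)] /\ teq3 (tmul3 phiinv phi) [:: (1, 1, 1)],
   (forall h, teq3 (tmul3 (tmul3 phi (DI2 (Delta h))) phiinv) (ID2 (Delta h))) &
   [/\
   (forall h, \sum_(p <- Delta h) eps p.2 *: p.1 = h)
   /\ (forall h, \sum_(p <- Delta h) eps p.1 *: p.2 = h),
   teq4 (tmul4 (IID3 phi) (DII3 phi))
        (tmul4 (tmul4 [seq (1, p.1.1, p.1.2, p.2) | p <- phi] (IDI3 phi))
               [seq (p.1.1, p.1.2, p.2, 1) | p <- phi]),
   teq2 [seq (eps p.1.2 *: p.1.1, p.2) | p <- phi] [:: (1, 1)],
   ((forall (c : k) (h g : H), S (c *: h + g) = c *: S h + S g)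
    /\ (forall h g, S (h * g) = S g * S h) /\ S 1 = 1)
   /\ (forall h, \sum_(p <- Delta h) S p.1 * alpha * p.2 = eps h *: alpha)
   /\ (forall h, \sum_(p <- Delta h) p.1 * beta * S p.2 = eps h *: beta) &
   (\sum_(p <- phi) p.1.1 * beta * S p.1.2 * alpha * p.2 = 1)
   /\ (\sum_(p <- phiinv) S p.1.1 * alpha * p.1.2 * beta * S p.2 = 1)
   /\ eps alpha = 1 /\ eps beta = 1]].

Definition p_L (phi : seq (H * H * H)) (Sinv : H -> H) (beta : H) : seq (H * H) :=
  [seq (p.1.2 * Sinv (p.1.1 * beta), p.2) | p <- phi].

Definition left_integral (eps : H -> k) (t : H) : Prop :=
  forall h, h * t = eps h *: t.

Definition is_Hmod (M : lmodType k) (act : H -> M -> M) : Prop :=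
  [/\ forall h, linear (act h),
      forall (c : k) (h g : H) (m : M), act (c *: h + g) m = c *: act h m + act g m,
      forall h g m, act (h * g) m = act h (act g m) &
      forall m, act 1 m = m].

Definition is_Hlin (M N : lmodType k) (actM : H -> M -> M) (actN : H -> N -> N)
    (f : M -> N) : Prop :=
  linear f /\ forall h m, f (actM h m) = actN h (f m).

Definition injective_Hmod (I : lmodType k) (actI : H -> I -> I) : Prop :=
  forall (M N : lmodType k) (actM : H -> M -> M) (actN : H -> N -> N)
         (i : M -> N) (f : M -> I),
    is_Hmod actM -> is_Hmod actN -> is_Hlin actM actN i -> injective i ->
    is_Hlin actM actI f ->
    exists g : N -> I, is_Hlin actN actI g /\ forall m, g (i m) = f m.

Definition module_algebra (eps : H -> k) (phi : seq (H * H * H))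
    (A : lmodType k) (act : H -> A -> A) (mulA : A -> A -> A) (oneA : A) : Prop :=
  [/\ is_Hmod act,
      (forall a, linear (mulA a)) /\
      (forall (c : k) (a b x : A), mulA (c *: a + b) x = c *: mulA a x + mulA b x)
      /\ (forall a, mulA oneA a = a) /\ (forall a, mulA a oneA = a),
      (forall a b c, mulA (mulA a b) c
         = \sum_(p <- phi) mulA (act p.1.1 a) (mulA (act p.1.2 b) (act p.2 c))),
      (forall h a b, act h (mulA a b)
         = \sum_(q <- Delta h) mulA (act q.1 a) (act q.2 b)) &
      (forall h, act h oneA = eps h *: oneA)].

Definition invariant (eps : H -> k) (A : lmodType k) (act : H -> A -> A) (a : A) :=
  forall h, act h a = eps h *: a.

(* Surjectivity of the Morita map (a, b) |-> t.[(p_L^1.a)(p_L^2.b)] defined on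
   A (x)_{A#H} A: every element of B is the image of a finite sum of pure tensors. *)
Definition morita_surjective (eps : H -> k) (phi : seq (H * H * H))
    (Sinv : H -> H) (beta t : H)
    (A : lmodType k) (act : H -> A -> A) (mulA : A -> A -> A) : Prop :=
  forall b : A, invariant eps act b ->
    exists s : seq (A * A),
      b = \sum_(x <- s)
            act t (\sum_(q <- p_L phi Sinv beta) mulA (act q.1 x.1) (act q.2 x.2)).

Definition harp (h : H) (f : 'Hom(H, k^o)) : 'Hom(H, k^o) :=
  linfun (fun g : H => f (g * h)).

Definition total_integral (eps : H -> k) (A : lmodType k) (act : H -> A -> A)
    (oneA : A) (Phi : 'Hom(H, k^o) -> A) : Prop :=
  [/\ linear Phi,
      forall h f, Phi (harp h f) = act h (Phi f) &
      Phi (linfun (eps : H -> k^o)) = oneA].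

Definition HA_hopf_module (eps : H -> k) (phi : seq (H * H * H))
    (A : lmodType k) (mulA : A -> A -> A) (oneA : A) (act : H -> A -> A)
    (M : lmodType k) (actH : H -> M -> M) (actA : A -> M -> M) : Prop :=
  [/\ is_Hmod actH,
      (forall a, linear (actA a)) /\
      (forall (c : k) (a b : A) (m : M), actA (c *: a + b) m = c *: actA a m + actA b m),
      (forall a b m, actA (mulA a b) m
         = \sum_(p <- phi) actA (act p.1.1 a) (actA (act p.1.2 b) (actH p.2 m))),
      (forall h a m, actH h (actA a m)
         = \sum_(q <- Delta h) actA (act q.1 a) (actH q.2 m)) &
      (forall m, actA oneA m = m)].

End Tensors.

(* Main.v *)
Require Import Defs.
From HB Require Import structures.
From mathcomp Require Import all_boot all_order all_algebra all_field.
From mathcomp Require Import ring.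
From mathcomp Require boolp classical_sets.
Set Implicit Arguments. Unset Strict Implicit. Unset Printing Implicit Defensive.
Import GRing.Theory.
Local Open Scope ring_scope.

Section Lin.
Variable k : fieldType.
Definition lin (U V : lmodType k) (f : U -> V) := forall c x y, f (c *: x + y) = c *: f x + f y.

Section L.
Variables (U V : lmodType k) (f : U -> V) (lf : lin f).
Lemma lin0 : f 0 = 0.
Proof. by have h := lf 1 0 0; rewrite scale1r addr0 scale1r in h; apply: (@addIr _ (f 0)); rewrite add0r -h. Qed.
Lemma linD x y : f (x + y) = f x + f y.
Proof. by have := lf 1 x y; rewrite !scale1r. Qed.
Lemma linZ c x : f (c *: x) = c *: f x.
Proof. by have := lf c x 0; rewrite !addr0 lin0 addr0. Qed.
Lemma linN x : f (- x) = - f x.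
Proof. by rewrite -scaleN1r linZ scaleN1r. Qed.
Lemma linB x y : f (x - y) = f x - f y.
Proof. by rewrite linD linN. Qed.
Lemma lin_sum I (r : seq I) (F : I -> U) : f (\sum_(i <- r) F i) = \sum_(i <- r) f (F i).
Proof. by elim: r => [|a r IH]; rewrite ?big_nil ?lin0 // !big_cons linD IH. Qed.
End L.

Lemma lin_comp (U V W : lmodType k) (f : V -> W) (g : U -> V) : lin f -> lin g -> lin (fun x => f (g x)).
Proof. by move=> lf lg c x y; rewrite (lg c x y) (lf c). Qed.
Lemma lin_sumF (U V : lmodType k) I (r : seq I) (F : I -> U -> V) :
  (forall i, lin (F i)) -> lin (fun x => \sum_(i <- r) F i x).
Proof.
move=> lF c x y; rewrite scaler_sumr -big_split /=; apply: eq_bigr => i _; exact: (lF i c x y).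
Qed.
Lemma lin_id (U : lmodType k) : lin (fun x : U => x). Proof. by []. Qed.
Lemma lin_scale (U V : lmodType k) (f : U -> V) (a : k) : lin f -> lin (fun x => a *: f x).
Proof. by move=> lf c x y; rewrite (lf c x y) scalerDr !scalerA mulrC. Qed.
Lemma lin_scalef (U V : lmodType k) (f : U -> k^o) (v : V) : lin f -> lin (fun x => f x *: v).
Proof. by move=> lf c x y; rewrite (lf c x y) scalerDl scalerA. Qed.
End Lin.

Section Tens.
Variables (k : fieldType) (H : falgType k).

Lemma lin_mull (a : H) : lin (fun x : H => a * x).
Proof. by move=> c x y; rewrite mulrDr scalerAr. Qed.
Lemma lin_mulr (a : H) : lin (fun x : H => x * a).
Proof. by move=> c x y; rewrite mulrDl scalerAl. Qed.

Definition S2 (V : lmodType k) (s : seq (H * H)) (B : H -> H -> V) := \sum_(p <- s) B p.1 p.2.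
Definition S3 (V : lmodType k) (s : seq (H * H * H)) (T : H -> H -> H -> V) :=
  \sum_(p <- s) T p.1.1 p.1.2 p.2.
Definition S4 (V : lmodType k) (s : seq (H * H * H * H)) (T : H -> H -> H -> H -> V) :=
  \sum_(p <- s) T p.1.1.1 p.1.1.2 p.1.2 p.2.

Definition ml2 (V : lmodType k) (B : H -> H -> V) :=
  (forall b, lin (fun a => B a b)) /\ (forall a, lin (B a)).
Definition ml3 (V : lmodType k) (T : H -> H -> H -> V) :=
  [/\ forall b c, lin (fun a => T a b c), forall a c, lin (fun b => T a b c) &
      forall a b, lin (T a b)].
Definition ml4 (V : lmodType k) (T : H -> H -> H -> H -> V) :=
  [/\ forall b c d, lin (fun a => T a b c d), forall a c d, lin (fun b => T a b c d),
      forall a b d, lin (fun c => T a b c d) & forall a b c, lin (T a b c)].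

Let n := \dim (fullv : {vspace H}).
Let e := vbasis (fullv : {vspace H}).
Let cf (i : 'I_n) : {linear H -> k^o} := coord e i.

Lemma expand (a : H) : a = \sum_i cf i a *: e`_i.
Proof. exact: (coord_vbasis (memvf a)). Qed.

Lemma lin_expand (V : lmodType k) (f : H -> V) : lin f -> forall a, f a = \sum_i cf i a *: f e`_i.
Proof. by move=> lf a; rewrite {1}(expand a) lin_sum //; apply: eq_bigr => i _; rewrite linZ. Qed.

Definition E2 (s u : seq (H * H)) := forall (V : lmodType k) (B : H -> H -> V), ml2 B -> S2 s B = S2 u B.
Definition E3 (s u : seq (H * H * H)) := forall (V : lmodType k) (T : H -> H -> H -> V), ml3 T -> S3 s T = S3 u T.
Definition E4 (s u : seq (H * H * H * H)) := forall (V : lmodType k) (T : H -> H -> H -> H -> V), ml4 T -> S4 s T = S4 u T.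

Lemma teq2E s u : teq2 s u -> E2 s u.
Proof.
move=> eq V B [l1 l2].
have key r : S2 r B = \sum_i \sum_j (\sum_(p <- r) cf i p.1 * cf j p.2) *: B e`_i e`_j.
  rewrite /S2 (eq_bigr (fun p => \sum_i \sum_j (cf i p.1 * cf j p.2) *: B e`_i e`_j)).
    rewrite exchange_big /=; apply: eq_bigr => i _; rewrite exchange_big /=.
    by apply: eq_bigr => j _; rewrite scaler_suml.
  move=> p _; rewrite (lin_expand (l1 _)); apply: eq_bigr => i _.
  rewrite (lin_expand (l2 _)) scaler_sumr; apply: eq_bigr => j _.
  by rewrite scalerA mulrC.
by rewrite !key; apply: eq_bigr => i _; apply: eq_bigr => j _; rewrite (eq (cf i) (cf j)).
Qed.

Lemma teq3E s u : teq3 s u -> E3 s u.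
Proof.
move=> eq V T [l1 l2 l3].
have key r : S3 r T = \sum_i \sum_j \sum_l
   (\sum_(p <- r) cf i p.1.1 * cf j p.1.2 * cf l p.2) *: T e`_i e`_j e`_l.
  rewrite /S3 (eq_bigr (fun p => \sum_i \sum_j \sum_l
      (cf i p.1.1 * cf j p.1.2 * cf l p.2) *: T e`_i e`_j e`_l)).
    rewrite exchange_big /=; apply: eq_bigr => i _; rewrite exchange_big /=.
    apply: eq_bigr => j _; rewrite exchange_big /=.
    by apply: eq_bigr => l _; rewrite scaler_suml.
  move=> p _; rewrite (lin_expand (l1 _ _)); apply: eq_bigr => i _.
  rewrite (lin_expand (l2 _ _)) scaler_sumr; apply: eq_bigr => j _.
  rewrite (lin_expand (l3 _ _)) !scaler_sumr; apply: eq_bigr => l _.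
  by rewrite !scalerA; congr (_ *: _); ring.
by rewrite !key; apply: eq_bigr => i _; apply: eq_bigr => j _; apply: eq_bigr => l _;
  rewrite (eq (cf i) (cf j) (cf l)).
Qed.

Lemma teq4E s u : teq4 s u -> E4 s u.
Proof.
move=> eq V T [l1 l2 l3 l4].
have key r : S4 r T = \sum_i \sum_j \sum_l \sum_m
   (\sum_(p <- r) cf i p.1.1.1 * cf j p.1.1.2 * cf l p.1.2 * cf m p.2) *: T e`_i e`_j e`_l e`_m.
  rewrite /S4 (eq_bigr (fun p => \sum_i \sum_j \sum_l \sum_m
      (cf i p.1.1.1 * cf j p.1.1.2 * cf l p.1.2 * cf m p.2) *: T e`_i e`_j e`_l e`_m)).
    rewrite exchange_big /=; apply: eq_bigr => i _; rewrite exchange_big /=.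
    apply: eq_bigr => j _; rewrite exchange_big /=.
    apply: eq_bigr => l _; rewrite exchange_big /=.
    by apply: eq_bigr => m _; rewrite scaler_suml.
  move=> p _; rewrite (lin_expand (l1 _ _ _)); apply: eq_bigr => i _.
  rewrite (lin_expand (l2 _ _ _)) scaler_sumr; apply: eq_bigr => j _.
  rewrite (lin_expand (l3 _ _ _)) !scaler_sumr; apply: eq_bigr => l _.
  rewrite (lin_expand (l4 _ _ _)) !scaler_sumr; apply: eq_bigr => m _.
  by rewrite !scalerA; congr (_ *: _); ring.
by rewrite !key; apply: eq_bigr => i _; apply: eq_bigr => j _; apply: eq_bigr => l _;
  apply: eq_bigr => m _; rewrite (eq (cf i) (cf j) (cf l) (cf m)).
Qed.
End Tens.

Section TAlg.
Variables (k : fieldType) (H : falgType k).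
Implicit Types (s u : seq (H * H)) (r w : seq (H * H * H)).

Lemma S2_tmul (V : lmodType k) s u (B : H -> H -> V) :
  S2 (tmul2 s u) B = S2 s (fun a b => S2 u (fun a' b' => B (a * a') (b * b'))).
Proof. by rewrite /S2 /tmul2 big_allpairs_dep. Qed.
Lemma S3_tmul (V : lmodType k) r w (T : H -> H -> H -> V) :
  S3 (tmul3 r w) T = S3 r (fun a b c => S3 w (fun a' b' c' => T (a * a') (b * b') (c * c'))).
Proof. by rewrite /S3 /tmul3 big_allpairs_dep. Qed.
Lemma S4_tmul (V : lmodType k) (r w : seq (H * H * H * H)) (T : H -> H -> H -> H -> V) :
  S4 (tmul4 r w) T = S4 r (fun a b c d => S4 w (fun a' b' c' d' => T (a * a') (b * b') (c * c') (d * d'))).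
Proof. by rewrite /S4 /tmul4 big_allpairs_dep. Qed.

Lemma S2_1 (V : lmodType k) (B : H -> H -> V) : S2 [:: (1, 1)] B = B 1 1.
Proof. by rewrite /S2 big_seq1. Qed.
Lemma S3_1 (V : lmodType k) (T : H -> H -> H -> V) : S3 [:: (1, 1, 1)] T = T 1 1 1.
Proof. by rewrite /S3 big_seq1. Qed.

Lemma ml2_tmul (V : lmodType k) u (B : H -> H -> V) : ml2 B ->
  ml2 (fun a b => S2 u (fun a' b' => B (a * a') (b * b'))).
Proof.
move=> [l1 l2]; split => x; apply: lin_sumF => p.
  exact: (lin_comp (l1 _) (lin_mulr _)).
exact: (lin_comp (l2 _) (lin_mulr _)).
Qed.
Lemma ml2_mull (V : lmodType k) (B : H -> H -> V) a b : ml2 B -> ml2 (fun a' b' => B (a * a') (b * b')).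
Proof. by move=> [l1 l2]; split => x; [exact: (lin_comp (l1 _) (lin_mull _))|exact: (lin_comp (l2 _) (lin_mull _))]. Qed.

Lemma ml3_tmul (V : lmodType k) w (T : H -> H -> H -> V) : ml3 T ->
  ml3 (fun a b c => S3 w (fun a' b' c' => T (a * a') (b * b') (c * c'))).
Proof.
move=> [l1 l2 l3]; split => x y; apply: lin_sumF => p.
- exact: (lin_comp (l1 _ _) (lin_mulr _)).
- exact: (lin_comp (l2 _ _) (lin_mulr _)).
- exact: (lin_comp (l3 _ _) (lin_mulr _)).
Qed.
Lemma ml3_mull (V : lmodType k) (T : H -> H -> H -> V) a b c : ml3 T ->
  ml3 (fun a' b' c' => T (a * a') (b * b') (c * c')).
Proof.
move=> [l1 l2 l3]; split => x y.
- exact: (lin_comp (l1 _ _) (lin_mull _)).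
- exact: (lin_comp (l2 _ _) (lin_mull _)).
- exact: (lin_comp (l3 _ _) (lin_mull _)).
Qed.

Lemma E2_tmul s s' u u' : E2 s s' -> E2 u u' -> E2 (tmul2 s u) (tmul2 s' u').
Proof.
move=> Es Eu V B mB; rewrite !S2_tmul (Es _ _ (ml2_tmul u mB)).
by apply: eq_bigr => p _; apply: Eu; apply: ml2_mull.
Qed.
Lemma E3_tmul r r' w w' : E3 r r' -> E3 w w' -> E3 (tmul3 r w) (tmul3 r' w').
Proof.
move=> Es Eu V T mT; rewrite !S3_tmul (Es _ _ (ml3_tmul w mT)).
by apply: eq_bigr => p _; apply: Eu; apply: ml3_mull.
Qed.
Lemma E2_refl s : E2 s s. Proof. by []. Qed.
Lemma E2_sym s u : E2 s u -> E2 u s. Proof. by move=> E V B mB; rewrite (E _ _ mB). Qed.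
Lemma E2_trans s u v : E2 s u -> E2 u v -> E2 s v.
Proof. by move=> E1 E2' V B mB; rewrite (E1 _ _ mB) (E2' _ _ mB). Qed.
Lemma E3_refl r : E3 r r. Proof. by []. Qed.
Lemma E3_sym r w : E3 r w -> E3 w r. Proof. by move=> E V B mB; rewrite (E _ _ mB). Qed.
Lemma E3_trans r w v : E3 r w -> E3 w v -> E3 r v.
Proof. by move=> E1 E2' V B mB; rewrite (E1 _ _ mB) (E2' _ _ mB). Qed.

Lemma E3_assoc r w v : E3 (tmul3 (tmul3 r w) v) (tmul3 r (tmul3 w v)).
Proof.
move=> V T _; rewrite !S3_tmul; apply: eq_bigr => p _; rewrite S3_tmul.
by apply: eq_bigr => q _; apply: eq_bigr => x _; rewrite !mulrA.
Qed.
Lemma E3_1l r : E3 (tmul3 [:: (1, 1, 1)] r) r.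
Proof. by move=> V T _; rewrite S3_tmul S3_1; apply: eq_bigr => p _; rewrite !mul1r. Qed.
Lemma E3_1r r : E3 (tmul3 r [:: (1, 1, 1)]) r.
Proof. by move=> V T _; rewrite S3_tmul; apply: eq_bigr => p _; rewrite S3_1 !mulr1. Qed.
End TAlg.

Section QH.
Variables (k : fieldType) (H : falgType k) (Delta : H -> seq (H * H)) (eps : H -> k)
  (phi phiinv : seq (H * H * H)) (S Sinv : H -> H) (alpha beta : H).
Hypothesis hq : quasiHopf Delta eps phi phiinv S alpha beta.
Hypotheses (SK : cancel S Sinv) (SiK : cancel Sinv S).

Lemma eps_lin : lin (eps : H -> k^o).
Proof. by case: hq => _ [eL _] _ _ _; exact: eL. Qed.
Lemma epsM a b : eps (a * b) = eps a * eps b.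
Proof. by case: hq => _ [_ [eM _]] _ _ _; exact: eM. Qed.
Lemma eps1 : eps 1 = 1.
Proof. by case: hq => _ [_ [_ e1]] _ _ _. Qed.
Lemma S_lin : lin S.
Proof. by case: hq => _ _ _ _ [_ _ _ [[SL _] _] _]; exact: SL. Qed.
Lemma SM a b : S (a * b) = S b * S a.
Proof. by case: hq => _ _ _ _ [_ _ _ [[_ [SM _]] _] _]; exact: SM. Qed.
Lemma S1 : S 1 = 1.
Proof. by case: hq => _ _ _ _ [_ _ _ [[_ [_ S1]] _] _]. Qed.
Lemma antA h : \sum_(p <- Delta h) S p.1 * alpha * p.2 = eps h *: alpha.
Proof. by case: hq => _ _ _ _ [_ _ _ [_ [a _]] _]; exact: a. Qed.
Lemma antB h : \sum_(p <- Delta h) p.1 * beta * S p.2 = eps h *: beta.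
Proof. by case: hq => _ _ _ _ [_ _ _ [_ [_ a]] _]; exact: a. Qed.
Lemma axB : \sum_(p <- phi) p.1.1 * beta * S p.1.2 * alpha * p.2 = 1.
Proof. by case: hq => _ _ _ _ [_ _ _ _ [a _]]. Qed.
Lemma epsA : eps alpha = 1.
Proof. by case: hq => _ _ _ _ [_ _ _ _ [_ [_ [a _]]]]. Qed.
Lemma epsB : eps beta = 1.
Proof. by case: hq => _ _ _ _ [_ _ _ _ [_ [_ [_ a]]]]. Qed.
Lemma cu1 h : \sum_(p <- Delta h) eps p.2 *: p.1 = h.
Proof. by case: hq => _ _ _ _ [[a _] _ _ _ _]; exact: a. Qed.
Lemma cu2 h : \sum_(p <- Delta h) eps p.1 *: p.2 = h.
Proof. by case: hq => _ _ _ _ [[_ a] _ _ _ _]; exact: a. Qed.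

Lemma S2_cat (V : lmodType k) s u (B : H -> H -> V) : S2 (s ++ u) B = S2 s B + S2 u B.
Proof. by rewrite /S2 big_cat. Qed.

Lemma DeltaL (V : lmodType k) (B : H -> H -> V) : ml2 B -> lin (fun h => S2 (Delta h) B).
Proof.
move=> mB c h g; case: hq => [[DL _]] _ _ _ _.
rewrite (teq2E (DL c h g) mB) S2_cat; congr (_ + _).
rewrite /S2 big_map scaler_sumr; apply: eq_bigr => p _ /=.
by case: mB => l1 _; rewrite (linZ (l1 _)).
Qed.
Lemma DeltaM (V : lmodType k) (B : H -> H -> V) a b : ml2 B ->
  S2 (Delta (a * b)) B = S2 (Delta a) (fun a1 a2 => S2 (Delta b) (fun b1 b2 => B (a1 * b1) (a2 * b2))).
Proof. by move=> mB; case: hq => [[_ [DM _]]] _ _ _ _; rewrite (teq2E (DM a b) mB) S2_tmul. Qed.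
Lemma Delta1 (V : lmodType k) (B : H -> H -> V) : ml2 B -> S2 (Delta 1) B = B 1 1.
Proof. by move=> mB; case: hq => [[_ [_ D1]]] _ _ _ _; rewrite (teq2E D1 mB) S2_1. Qed.

Lemma cuL (V : lmodType k) (f : H -> V) h : lin f -> S2 (Delta h) (fun a b => eps b *: f a) = f h.
Proof. by move=> lf; rewrite -{2}(cu1 h) (lin_sum lf); apply: eq_bigr => p _; rewrite (linZ lf). Qed.
Lemma cuR (V : lmodType k) (f : H -> V) h : lin f -> S2 (Delta h) (fun a b => eps a *: f b) = f h.
Proof. by move=> lf; rewrite -{2}(cu2 h) (lin_sum lf); apply: eq_bigr => p _; rewrite (linZ lf). Qed.

Lemma S3_DI2 (V : lmodType k) s (T : H -> H -> H -> V) :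
  S3 (DI2 Delta s) T = S2 s (fun a b => S2 (Delta a) (fun a1 a2 => T a1 a2 b)).
Proof. by rewrite /S3 /DI2 big_flatten big_map; apply: eq_bigr => p _; rewrite big_map. Qed.
Lemma S3_ID2 (V : lmodType k) s (T : H -> H -> H -> V) :
  S3 (ID2 Delta s) T = S2 s (fun a b => S2 (Delta b) (fun b1 b2 => T a b1 b2)).
Proof. by rewrite /S3 /ID2 big_flatten big_map; apply: eq_bigr => p _; rewrite big_map. Qed.

Lemma Eqc h : E3 (tmul3 (tmul3 phi (DI2 Delta (Delta h))) phiinv) (ID2 Delta (Delta h)).
Proof. by case: hq => _ _ _ qc _; apply: teq3E; exact: qc. Qed.
Lemma Epp1 : E3 (tmul3 phi phiinv) [:: (1, 1, 1)].
Proof. by case: hq => _ _ [a _] _ _; apply: teq3E. Qed.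
Lemma Epp2 : E3 (tmul3 phiinv phi) [:: (1, 1, 1)].
Proof. by case: hq => _ _ [_ a] _ _; apply: teq3E. Qed.

Lemma QC h : E3 (DI2 Delta (Delta h)) (tmul3 (tmul3 phiinv (ID2 Delta (Delta h))) phi).
Proof.
set D := DI2 Delta (Delta h); set I := ID2 Delta (Delta h).
have e1 : E3 D (tmul3 (tmul3 [:: (1, 1, 1)] D) [:: (1, 1, 1)]).
  by apply: (E3_trans (E3_sym (E3_1l D))); apply: (E3_sym (E3_1r _)).
have e2 := E3_tmul (E3_tmul (E3_sym Epp2) (E3_refl D)) (E3_sym Epp2).
have e3 := E3_tmul (E3_assoc phiinv phi D) (E3_refl (tmul3 phiinv phi)).
have e4 := E3_sym (E3_assoc (tmul3 phiinv (tmul3 phi D)) phiinv phi).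
have e5 := E3_tmul (E3_assoc phiinv (tmul3 phi D) phiinv) (E3_refl phi).
have e6 := E3_tmul (E3_tmul (E3_refl phiinv) (Eqc h)) (E3_refl phi).
exact: (E3_trans e1 (E3_trans e2 (E3_trans e3 (E3_trans e4 (E3_trans e5 e6))))).
Qed.

Lemma QC' h : E3 (tmul3 phi (DI2 Delta (Delta h))) (tmul3 (ID2 Delta (Delta h)) phi).
Proof.
apply: (E3_trans (E3_sym (E3_1r _))).
apply: (E3_trans (E3_tmul (E3_refl _) (E3_sym Epp2))).
apply: (E3_trans (E3_sym (E3_assoc _ _ _))).
exact: E3_tmul (Eqc h) (E3_refl _).
Qed.
End QH.

Section QH2.
Variables (k : fieldType) (H : falgType k) (Delta : H -> seq (H * H)) (eps : H -> k)
  (phi phiinv : seq (H * H * H)) (S Sinv : H -> H) (alpha beta : H).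
Hypothesis hq : quasiHopf Delta eps phi phiinv S alpha beta.

Lemma S4_IID3 (V : lmodType k) r (T : H -> H -> H -> H -> V) :
  S4 (IID3 Delta r) T = S3 r (fun a b c => S2 (Delta c) (fun c1 c2 => T a b c1 c2)).
Proof. by rewrite /S4 /IID3 big_flatten big_map; apply: eq_bigr => p _; rewrite big_map. Qed.
Lemma S4_DII3 (V : lmodType k) r (T : H -> H -> H -> H -> V) :
  S4 (DII3 Delta r) T = S3 r (fun a b c => S2 (Delta a) (fun a1 a2 => T a1 a2 b c)).
Proof. by rewrite /S4 /DII3 big_flatten big_map; apply: eq_bigr => p _; rewrite big_map. Qed.
Lemma S4_IDI3 (V : lmodType k) r (T : H -> H -> H -> H -> V) :
  S4 (IDI3 Delta r) T = S3 r (fun a b c => S2 (Delta b) (fun b1 b2 => T a b1 b2 c)).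
Proof. by rewrite /S4 /IDI3 big_flatten big_map; apply: eq_bigr => p _; rewrite big_map. Qed.

Lemma normM (V : lmodType k) (B : H -> H -> V) : ml2 B ->
  S3 phi (fun a b c => eps b *: B a c) = B 1 1.
Proof.
move=> mB; case: hq => _ _ _ _ [_ _ nrm _ _].
have := teq2E nrm mB; rewrite /S2 big_map big_seq1 /= => <-.
by rewrite /S3; apply: eq_bigr => p _; case: mB => l1 _; rewrite (linZ (l1 _)).
Qed.

Lemma S3_lin (U V : lmodType k) (f : U -> V) r (T : H -> H -> H -> U) : lin f ->
  f (S3 r T) = S3 r (fun a b c => f (T a b c)).
Proof. by move=> lf; rewrite /S3 (lin_sum lf). Qed.
Lemma S2_lin (U V : lmodType k) (f : U -> V) s (T : H -> H -> U) : lin f ->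
  f (S2 s T) = S2 s (fun a b => f (T a b)).
Proof. by move=> lf; rewrite /S2 (lin_sum lf). Qed.
Lemma S3_ext (V : lmodType k) r (T T' : H -> H -> H -> V) :
  (forall a b c, T a b c = T' a b c) -> S3 r T = S3 r T'.
Proof. by move=> e; apply: eq_bigr => p _; rewrite e. Qed.
Lemma S2_ext (V : lmodType k) s (T T' : H -> H -> V) :
  (forall a b, T a b = T' a b) -> S2 s T = S2 s T'.
Proof. by move=> e; apply: eq_bigr => p _; rewrite e. Qed.
Lemma S4_ext (V : lmodType k) r (T T' : H -> H -> H -> H -> V) :
  (forall a b c d, T a b c d = T' a b c d) -> S4 r T = S4 r T'.
Proof. by move=> e; apply: eq_bigr => p _; rewrite e. Qed.
Lemma S4_map3 (V : lmodType k) r (f : H * H * H -> H * H * H * H) (T : H -> H -> H -> H -> V) :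
  S4 [seq f p | p <- r] T = S3 r (fun a b c => let q := f (a, b, c) in T q.1.1.1 q.1.1.2 q.1.2 q.2).
Proof. by rewrite /S4 big_map; apply: eq_bigr => -[[]]. Qed.
Lemma S3_scale (V : lmodType k) r (c : k) (T : H -> H -> H -> V) :
  c *: S3 r T = S3 r (fun a b d => c *: T a b d).
Proof. by rewrite /S3 scaler_sumr. Qed.
Lemma S2_scale (V : lmodType k) s (c : k) (T : H -> H -> V) :
  c *: S2 s T = S2 s (fun a b => c *: T a b).
Proof. by rewrite /S2 scaler_sumr. Qed.
End QH2.

Section QH3.
Variables (k : fieldType) (H : falgType k) (Delta : H -> seq (H * H)) (eps : H -> k)
  (phi phiinv : seq (H * H * H)) (S Sinv : H -> H) (alpha beta : H).
Hypothesis hq : quasiHopf Delta eps phi phiinv S alpha beta.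

Lemma normX (V : lmodType k) (T : H -> H -> H -> V) : ml3 T ->
  S3 phi T = S3 phi (fun X1 X2 X3 => eps X1 *: S3 phi (fun Y1 Y2 Y3 => T Y1 (X2 * Y2) (X3 * Y3))).
Proof.
move=> mT; case: (mT) => l1 l2 l3.
have el := eps_lin hq.
pose T4 := fun a b c d => eps b *: T a c d.
have mT4 : ml4 T4.
  split => *; [exact: lin_scale (l1 _ _)|exact: lin_scalef el|
               exact: lin_scale (l2 _ _)|exact: lin_scale (l3 _ _)].
have pent : teq4 (tmul4 (IID3 Delta phi) (DII3 Delta phi))
        (tmul4 (tmul4 [seq (1, p.1.1, p.1.2, p.2) | p <- phi] (IDI3 Delta phi))
               [seq (p.1.1, p.1.2, p.2, 1) | p <- phi]).
  by case: hq => _ _ _ _ [_ pe _ _ _].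
have := teq4E pent mT4.
pose B a c := S2 (Delta c) (fun c1 c2 => S3 phi (fun Y1 Y2 Y3 => T (a * Y1) (c1 * Y2) (c2 * Y3))).
have mB : ml2 B.
  split => x.
    apply: lin_sumF => q; rewrite /S3; apply: lin_sumF => p.
    exact: (lin_comp (l1 _ _) (lin_mulr _)).
  apply: (DeltaL hq); split => y; rewrite /S3; apply: lin_sumF => p.
    exact: (lin_comp (l2 _ _) (lin_mulr _)).
  exact: (lin_comp (l3 _ _) (lin_mulr _)).
rewrite S4_tmul S4_IID3 (S3_ext _ (T' := fun X1 X2 X3 => eps X2 *: B X1 X3)); last first.
  move=> a b c; rewrite S2_scale; apply: S2_ext => c1 c2; rewrite S4_DII3 S3_scale.
  apply: S3_ext => Y1 Y2 Y3.
  rewrite (S2_ext _ (T' := fun a1 a2 => eps a2 *: (eps b *: T (a * a1) (c1 * Y2) (c2 * Y3)))).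
    rewrite (cuL hq) //; apply: lin_scale; exact: (lin_comp (l1 _ _) (lin_mull _)).
  by move=> a1 a2; rewrite /T4 (epsM hq) scalerA mulrC.
rewrite (normM hq) // /B (Delta1 hq); last first.
  split => y; rewrite /S3; apply: lin_sumF => p.
    exact: (lin_comp (l2 _ _) (lin_mulr _)).
  exact: (lin_comp (l3 _ _) (lin_mulr _)).
rewrite (S3_ext _ (T' := T)); last by move=> *; rewrite !mul1r.
move=> ->; rewrite S4_tmul S4_tmul S4_map3 /=; apply: S3_ext => X1 X2 X3.
rewrite S4_IDI3 S3_scale; apply: S3_ext => Y1 Y2 Y3.
rewrite (S2_ext _ (T' := fun y1 y2 => eps y1 *: (eps X1 *: T Y1 (X2 * y2) (X3 * Y3)))).
  rewrite (cuR hq) //; apply: lin_scale; exact: (lin_comp (l2 _ _) (lin_mull _)).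
move=> y1 y2; rewrite S4_map3 /=.
rewrite (S3_ext _ (T' := fun Z1 Z2 Z3 => eps Z2 *: ((eps X1 * eps y1) *: T (Y1 * Z1) (X2 * y2 * Z3) (X3 * Y3)))).
  rewrite (normM hq); last first.
    split => z; apply: lin_scale.
      exact: (lin_comp (l1 _ _) (lin_mull _)).
    exact: (lin_comp (l2 _ _) (lin_mull _)).
  by rewrite !mulr1 scalerA mulrC.
by move=> Z1 Z2 Z3; rewrite /T4 !(epsM hq) !mulr1 !mul1r scalerA [eps Z2 * _]mulrC.
Qed.
End QH3.



Section QH4.
Variables (k : fieldType) (H : falgType k) (Delta : H -> seq (H * H)) (eps : H -> k)
  (phi phiinv : seq (H * H * H)) (S Sinv : H -> H) (alpha beta : H).
Hypothesis hq : quasiHopf Delta eps phi phiinv S alpha beta.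

Lemma ml3_eps (V : lmodType k) (B : H -> H -> V) : ml2 B -> ml3 (fun a b c => eps a *: B b c).
Proof.
move=> [l1 l2]; split => x y; [exact: lin_scalef (eps_lin hq)|exact: lin_scale (l1 _)|exact: lin_scale (l2 _)].
Qed.

Lemma normPhi (V : lmodType k) (B : H -> H -> V) : ml2 B ->
  S3 phi (fun a b c => eps a *: B b c) = B 1 1.
Proof.
move=> mB; case: (mB) => l1 l2.
pose T a b c := S3 phiinv (fun y1 y2 y3 => eps (a * y1) *: B (b * y2) (c * y3)).
have mT : ml3 T by apply: (@ml3_tmul _ _ _ phiinv (fun a b c => eps a *: B b c)); apply: ml3_eps.
have := normX hq mT.
have -> : S3 phi T = S3 (tmul3 phi phiinv) (fun a b c => eps a *: B b c) by rewrite S3_tmul.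
rewrite (Epp1 hq (ml3_eps mB)) S3_1 (eps1 hq) scale1r => ->.
apply: S3_ext => X1 X2 X3; congr (_ *: _).
have -> : S3 phi (fun Y1 Y2 Y3 => T Y1 (X2 * Y2) (X3 * Y3)) =
    S3 (tmul3 phi phiinv) (fun a b c => eps a *: B (X2 * b) (X3 * c)).
  by rewrite S3_tmul; apply: S3_ext => *; apply: S3_ext => *; rewrite !mulrA.
rewrite (Epp1 hq); last first.
  apply: ml3_eps; split => z; [exact: (lin_comp (l1 _) (lin_mull _))|exact: (lin_comp (l2 _) (lin_mull _))].
by rewrite S3_1 (eps1 hq) scale1r !mulr1.
Qed.

Lemma normInv (V : lmodType k) (B : H -> H -> V) : ml2 B ->
  S3 phiinv (fun a b c => eps a *: B b c) = B 1 1.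
Proof.
move=> mB; case: (mB) => l1 l2.
have := Epp2 hq (ml3_eps mB); rewrite S3_1 (eps1 hq) scale1r S3_tmul => <-.
apply: S3_ext => x1 x2 x3; symmetry.
transitivity (eps x1 *: S3 phi (fun a b c => eps a *: B (x2 * b) (x3 * c))).
  by rewrite S3_scale; apply: S3_ext => *; rewrite (epsM hq) scalerA.
rewrite (normPhi (B := fun b c => B (x2 * b) (x3 * c))) ?mulr1 //.
split => z; [exact: (lin_comp (l1 _) (lin_mull _))|exact: (lin_comp (l2 _) (lin_mull _))].
Qed.
End QH4.

Lemma lin_ext (k : fieldType) (U V : lmodType k) (f g : U -> V) : (forall x, f x = g x) -> lin g -> lin f.
Proof. by move=> e lg c x y; rewrite !e. Qed.
Lemma S3S2 (k : fieldType) (H : falgType k) (V : lmodType k) r s (F : H -> H -> H -> H -> H -> V) :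
  S3 r (fun a b c => S2 s (F a b c)) = S2 s (fun x y => S3 r (fun a b c => F a b c x y)).
Proof. by rewrite /S3 /S2 exchange_big. Qed.
Lemma S2S2 (k : fieldType) (H : falgType k) (V : lmodType k) r s (F : H -> H -> H -> H -> V) :
  S2 r (fun a b => S2 s (F a b)) = S2 s (fun x y => S2 r (fun a b => F a b x y)).
Proof. by rewrite /S2 /S2 exchange_big. Qed.

Section QH5.
Variables (k : fieldType) (H : falgType k) (Delta : H -> seq (H * H)) (eps : H -> k)
  (phi phiinv : seq (H * H * H)) (S Sinv : H -> H) (alpha beta : H).
Hypothesis hq : quasiHopf Delta eps phi phiinv S alpha beta.
Hypotheses (SK : cancel S Sinv) (SiK : cancel Sinv S).

Lemma P1 (V : lmodType k) (B : H -> H -> V) h : ml2 B ->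
  S2 (Delta h) (fun t1 t2 => S2 (Delta t1) (fun s1 s2 =>
     S3 phiinv (fun x1 x2 x3 => B (s1 * x1) (s2 * x2 * beta * S x3 * S t2))))
  = S3 phiinv (fun x1 x2 x3 => B (x1 * h) (x2 * beta * S x3)).
Proof.
move=> mB; case: (mB) => l1 l2; have lS := S_lin hq.
pose T a b c := S3 phiinv (fun x1 x2 x3 => B (a * x1) (b * x2 * beta * S x3 * S c)).
have mT : ml3 T.
  split => x y; rewrite /T /S3; apply: lin_sumF => p.
  - exact: (lin_comp (l1 _) (lin_mulr _)).
  - apply: (lin_ext (g := fun b => B (x * p.1.1) (b * (p.1.2 * beta * S p.2 * S y)))).
      by move=> z; rewrite !mulrA.
    exact: (lin_comp (l2 _) (lin_mulr _)).
  - exact: (lin_comp (l2 _) (lin_comp (lin_mull _) lS)).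
have -> : S2 (Delta h) (fun t1 t2 => S2 (Delta t1) (fun s1 s2 =>
     S3 phiinv (fun x1 x2 x3 => B (s1 * x1) (s2 * x2 * beta * S x3 * S t2))))
   = S3 (DI2 Delta (Delta h)) T by rewrite S3_DI2.
rewrite (QC hq h mT) S3_tmul S3_tmul; apply: S3_ext => y1 y2 y3.
rewrite (S3_ext _ (T' := fun w1 w2 w3 => B (y1 * w1) (y2 * w2 * beta * S w3 * S y3))); last first.
  move=> w1 w2 w3.
  have -> : S3 phi (fun a' b' c' => T (y1 * w1 * a') (y2 * w2 * b') (y3 * w3 * c')) =
     S3 (tmul3 phi phiinv) (fun a b c => B (y1 * w1 * a) (y2 * w2 * b * beta * S c * S w3 * S y3)).
    rewrite S3_tmul; apply: S3_ext => *; apply: S3_ext => *.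
    by rewrite !(SM hq) !mulrA.
  rewrite (Epp1 hq); first by rewrite S3_1 (S1 hq) !mulr1.
  split => x y.
  - exact: (lin_comp (l1 _) (lin_mull _)).
  - apply: (lin_ext (g := fun z => B (y1 * w1 * x) ((y2 * w2) * z * (beta * S y * S w3 * S y3)))).
      by move=> z; rewrite !mulrA.
    exact: (lin_comp (l2 _) (lin_comp (lin_mulr _) (lin_mull _))).
  - apply: (lin_ext (g := fun z => B (y1 * w1 * x) ((y2 * w2 * y * beta) * S z * (S w3 * S y3)))).
      by move=> z; rewrite !mulrA.
    exact: (lin_comp (l2 _) (lin_comp (lin_mulr _) (lin_comp (lin_mull _) lS))).
rewrite S3_ID2.
rewrite (S2_ext _ (T' := fun a b => eps b *: B (y1 * a) (y2 * beta * S y3))); last first.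
  move=> a b.
  have -> : S2 (Delta b) (fun b1 b2 => B (y1 * a) (y2 * b1 * beta * S b2 * S y3)) =
    B (y1 * a) (y2 * S2 (Delta b) (fun b1 b2 => b1 * beta * S b2) * S y3).
    rewrite (S2_lin (f := fun z => B (y1 * a) (y2 * z * S y3))).
      by apply: S2_ext => *; rewrite !mulrA.
    exact: (lin_comp (l2 _) (lin_comp (lin_mulr _) (lin_mull _))).
  by rewrite /S2 /= (antB hq) -scalerAr -scalerAl (linZ (l2 _)).
by rewrite (cuL hq) //; exact: (lin_comp (l1 _) (lin_mull _)).
Qed.
End QH5.

Section QH6.
Variables (k : fieldType) (H : falgType k) (Delta : H -> seq (H * H)) (eps : H -> k)
  (phi phiinv : seq (H * H * H)) (S Sinv : H -> H) (alpha beta : H).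
Hypothesis hq : quasiHopf Delta eps phi phiinv S alpha beta.
Hypotheses (SK : cancel S Sinv) (SiK : cancel Sinv S).

Lemma Q1 (V : lmodType k) (Psi : H -> H -> V) h : ml2 Psi ->
  S3 phi (fun X1 X2 X3 => S3 (DI2 Delta (Delta h)) (fun d1 d2 d3 =>
      Psi (X1 * d1) (S (Sinv (alpha * X3) * X2 * d2) * d3)))
  = S3 phi (fun X1 X2 X3 => Psi (h * X1) (S (Sinv (alpha * X3) * X2))).
Proof.
move=> mP; case: (mP) => l1 l2; have lS := S_lin hq.
pose W a b c := Psi a (S b * alpha * c).
have mW : ml3 W.
  split => x y; rewrite /W.
  - exact: l1.
  - exact: (lin_comp (l2 _) (lin_comp (lin_mulr _) (lin_comp (lin_mulr _) lS))).
  - exact: (lin_comp (l2 _) (lin_mull _)).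
transitivity (S3 (tmul3 phi (DI2 Delta (Delta h))) W).
  rewrite S3_tmul; apply: S3_ext => X1 X2 X3; apply: S3_ext => d1 d2 d3.
  by rewrite /W !(SM hq) SiK !mulrA.
rewrite (QC' hq h mW) S3_tmul S3_ID2.
transitivity (S2 (Delta h) (fun a b => S3 phi (fun X1 X2 X3 => eps b *: Psi (a * X1) (S X2 * alpha * X3)))).
  apply: S2_ext => a b; rewrite -S3S2; apply: S3_ext => X1 X2 X3.
  transitivity (Psi (a * X1) (S X2 * S2 (Delta b) (fun b1 b2 => S b1 * alpha * b2) * X3)).
    rewrite (S2_lin (f := fun z => Psi (a * X1) (S X2 * z * X3))).
      by apply: S2_ext => *; rewrite /W !(SM hq) !mulrA.
    exact: (lin_comp (l2 _) (lin_comp (lin_mulr _) (lin_mull _))).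
  by rewrite /S2 /= (antA hq) -scalerAr -scalerAl (linZ (l2 _)).
rewrite -S3S2; apply: S3_ext => X1 X2 X3.
rewrite (cuL hq); last exact: (lin_comp (l1 _) (lin_mulr _)).
by rewrite (SM hq) SiK !mulrA.
Qed.

Lemma Casimir (V : lmodType k) (Phi : H -> H -> V) t h : ml2 Phi -> left_integral eps t ->
  S3 phi (fun X1 X2 X3 => S2 (Delta t) (fun t1 t2 => Phi (X1 * t1) (S (Sinv (alpha * X3) * X2 * t2) * h)))
  = S3 phi (fun X1 X2 X3 => S2 (Delta t) (fun t1 t2 => Phi (h * X1 * t1) (S (Sinv (alpha * X3) * X2 * t2)))).
Proof.
move=> mP lt; case: (mP) => l1 l2; have lS := S_lin hq.
pose Psi a b := S2 (Delta t) (fun t1 t2 => Phi (a * t1) (S t2 * b)).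
have mPsi : ml2 Psi.
  split => x; rewrite /Psi /S2; apply: lin_sumF => p.
    exact: (lin_comp (l1 _) (lin_mulr _)).
  exact: (lin_comp (l2 _) (lin_mull _)).
have lL : lin (fun h => S3 phi (fun X1 X2 X3 => S2 (Delta t) (fun t1 t2 =>
     Phi (X1 * t1) (S (Sinv (alpha * X3) * X2 * t2) * h)))).
  rewrite /S3; apply: lin_sumF => p; rewrite /S2; apply: lin_sumF => q.
  exact: (lin_comp (l2 _) (lin_mull _)).
rewrite -(cuR hq _ lL).
transitivity (S3 phi (fun X1 X2 X3 => S3 (DI2 Delta (Delta h)) (fun d1 d2 d3 =>
      Psi (X1 * d1) (S (Sinv (alpha * X3) * X2 * d2) * d3)))).
  transitivity (S3 phi (fun X1 X2 X3 => S2 (Delta h) (fun a b => S2 (Delta a) (fun a1 a2 =>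
      Psi (X1 * a1) (S (Sinv (alpha * X3) * X2 * a2) * b))))); last first.
    by apply: S3_ext => *; rewrite S3_DI2.
  rewrite S3S2; apply: S2_ext => e1 e2; rewrite S3_scale; apply: S3_ext => X1 X2 X3.
  pose G a b := Phi (X1 * a) (S (Sinv (alpha * X3) * X2 * b) * e2).
  have mG : ml2 G.
    split => x; first exact: (lin_comp (l1 _) (lin_mull _)).
    exact: (lin_comp (l2 _) (lin_comp (lin_mulr _) (lin_comp lS (lin_mull _)))).
  transitivity (eps e1 *: S2 (Delta t) G) => //.
  rewrite -(linZ (DeltaL hq mG)) -lt (DeltaM hq _ _ mG).
  apply: S2_ext => a1 a2; rewrite /Psi; apply: S2_ext => t1 t2.
  by rewrite /G !(SM hq) !mulrA.
rewrite (Q1 _ mPsi); apply: S3_ext => X1 X2 X3; rewrite /Psi.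
by apply: S2_ext => a b; rewrite !(SM hq) ?mulrA.
Qed.
End QH6.

Module ExtM.
Import boolp classical_sets.
Section Ext.
Variables (k : fieldType) (M' N M : lmodType k) (i : M' -> N) (f : M' -> M).
Hypotheses (li : linear i) (lf : linear f) (ii : injective i).

Definition Bg : set (N * M) := fun p => exists m, p = (i m, f m).
Definition funcG (G : set (N * M)) := forall n m1 m2, G (n, m1) -> G (n, m2) -> m1 = m2.
Definition linG (G : set (N * M)) := forall c n1 m1 n2 m2, G (n1, m1) -> G (n2, m2) ->
  G (c *: n1 + n2, c *: m1 + m2).
Definition PG (G : set (N * M)) := (G = set0 \/ (forall p, Bg p -> G p)) /\ funcG G /\ linG G.

Lemma lin0' (U V : lmodType k) (g : U -> V) : linear g -> g 0 = 0.
Proof. by move=> lg; have h := lg 1 0 0; rewrite scale1r addr0 scale1r in h; apply: (@addIr _ (g 0)); rewrite add0r -h. Qed.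
Arguments lin0' {U V g}.
Lemma i0 : i 0 = 0. Proof. exact: lin0' li. Qed.
Lemma f0 : f 0 = 0. Proof. exact: lin0' lf. Qed.

Lemma vs_ext : exists g : N -> M, linear g /\ forall m, g (i m) = f m.
Proof.
have [A [[[A0|BA] [fA lA]] Amax]] : exists A, PG A /\ forall B, (A `<` B)%classic -> ~ PG B.
- apply: Zorn_bigcup => F FP Ftot; split; last split.
  + case: (pselect (exists G, F G /\ G <> set0)) => [[G [FG Gn]]|nF].
      right=> p Bp; exists G => //; case: (FP G FG) => [[//|BG] _]; exact: BG.
    left; apply/seteqP; split => // p [G FG Gp]; apply: nF; exists G; split => // G0.
    by rewrite G0 in Gp.
  + move=> n m1 m2 [G1 F1 G1p] [G2 F2 G2p].
    case: (Ftot _ _ F1 F2) => [s|s].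
    * by case: (FP _ F2) => _ [fG _]; apply: (fG n); [apply: s|].
    * by case: (FP _ F1) => _ [fG _]; apply: (fG n); [|apply: s].
  + move=> c n1 m1 n2 m2 [G1 F1 G1p] [G2 F2 G2p].
    case: (Ftot _ _ F1 F2) => [s|s].
    * by exists G2 => //; case: (FP _ F2) => _ [_ lG]; apply: lG => //; apply: s.
    * by exists G1 => //; case: (FP _ F1) => _ [_ lG]; apply: lG => //; apply: s.
- exfalso; apply: (Amax Bg).
  + rewrite A0; split; first by [].
    have B00 : Bg (0,0) by exists 0; rewrite i0 f0.
    by move=> h; exact: (h _ B00).
  + split; first by right.
    split.
    * by move=> n m1 m2 [a [-> ->]] [b [/ii -> ->]].
    * move=> c n1 m1 n2 m2 [a [-> ->]] [b [-> ->]]; exists (c *: a + b).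
      by rewrite li lf.
have A00 : A (0, 0) by apply: BA; exists 0; rewrite i0 f0.
have Atot : forall n, exists m, A (n, m).
  move=> n; apply: contrapT => nA.
  pose A' : set (N * M) := fun p => exists c a b, A (a, b) /\ p = (a + c *: n, b).
  apply: (Amax A').
  - split.
    + by move=> [a b] Ap; exists 0, a, b; rewrite scale0r addr0.
    + move=> sub; apply: nA; exists 0; apply: sub; exists 1, 0, 0; split => //.
      by rewrite add0r scale1r.
  - split; first by right => p /BA Ap; exists 0, p.1, p.2; rewrite scale0r addr0; case: p Ap.
    split.
    + move=> x m1 m2 [c1 [a1 [b1 [Ab1 [e1 ->]]]]] [c2 [a2 [b2 [Ab2 [e2 ->]]]]].
      have [ec|nec] := eqVneq c1 c2.
        by move: e2; rewrite e1 ec => /addIr e; apply: (fA a1) => //; rewrite e.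
      exfalso; apply: nA; exists ((c1 - c2)^-1 *: (b2 - b1)).
      have -> : n = (c1 - c2)^-1 *: (a2 - a1).
        apply: (scalerI (a:=c1 - c2)); first by rewrite subr_eq0.
        rewrite scalerA divff ?subr_eq0 // scale1r scalerBl.
        have e : a1 + c1 *: n = a2 + c2 *: n by rewrite -e1 -e2.
        have -> : a2 = a1 + c1 *: n - c2 *: n by rewrite e addrK.
        by rewrite [RHS]addrAC [a1 + _]addrC addrK.
      have h1 : A (- a1, - b1) by rewrite -(addr0 (- a1)) -(addr0 (- b1)) -!scaleN1r; apply: lA.
      have h2 : A (a2 - a1, b2 - b1) by rewrite -(scale1r a2) -(scale1r b2); apply: lA.
      by rewrite -(addr0 (_ *: (a2 - a1))) -(addr0 (_ *: (b2 - b1))); apply: lA.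
    + move=> c x1 m1 x2 m2 [c1 [a1 [b1 [Ab1 [-> ->]]]]] [c2 [a2 [b2 [Ab2 [-> ->]]]]].
      exists (c * c1 + c2), (c *: a1 + a2), (c *: b1 + b2); split; first exact: lA.
      congr (_, _); rewrite scalerDr scalerDl scalerA.
      by rewrite -!addrA; congr (_ + _); rewrite addrCA.
pose g n := projT1 (cid (Atot n)).
have gP n : A (n, g n) by rewrite /g; case: cid.
exists g; split.
- by move=> c x y; apply: (fA (c *: x + y)) => //; apply: lA.
- by move=> m; apply: (fA (i m)) => //; apply: BA; exists m.
Qed.
End Ext.
End ExtM.




Section Main.
Variables (k : fieldType) (H : falgType k) (Delta : H -> seq (H * H)) (eps : H -> k)
  (phi phiinv : seq (H * H * H)) (S Sinv : H -> H) (alpha beta t : H)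
  (A : lmodType k) (act : H -> A -> A) (mulA : A -> A -> A) (oneA : A).
Hypothesis hq : quasiHopf Delta eps phi phiinv S alpha beta.
Hypotheses (SK : cancel S Sinv) (SiK : cancel Sinv S).
Hypothesis lt : left_integral eps t.
Hypothesis hA : module_algebra Delta eps phi act mulA oneA.

Lemma Hmod_l (M : lmodType k) (ac : H -> M -> M) : is_Hmod ac -> forall h, lin (ac h).
Proof. by case=> l _ _ _ h c x y; exact: l. Qed.
Lemma Hmod_r (M : lmodType k) (ac : H -> M -> M) : is_Hmod ac -> forall m, lin (ac^~ m).
Proof. by case=> _ l _ _ m c x y; exact: l. Qed.
Lemma Hmod_M (M : lmodType k) (ac : H -> M -> M) : is_Hmod ac -> forall h g m, ac (h * g) m = ac h (ac g m).
Proof. by case. Qed.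
Lemma Hmod_1 (M : lmodType k) (ac : H -> M -> M) : is_Hmod ac -> forall m, ac 1 m = m.
Proof. by case. Qed.

Lemma actA1 : is_Hmod act.
Proof. by case: hA. Qed.
Lemma act_one h : act h oneA = eps h *: oneA.
Proof. by case: hA => _ _ _ _ ->. Qed.

Section Hopf.
Variables (a0 : A) (ha0 : act t a0 = oneA).
Variables (M : lmodType k) (actH : H -> M -> M) (actA : A -> M -> M).
Hypothesis HM : HA_hopf_module Delta eps phi mulA oneA act actH actA.

Let HMH : is_Hmod actH. Proof. by case: HM. Qed.
Let lA a : lin (actA a). Proof. by case: HM => _ [l _] _ _ _ c x y; exact: l. Qed.
Let lA' m : lin (actA^~ m). Proof. by case: HM => _ [_ l] _ _ _ c x y; exact: l. Qed.
Let compat h a m : actH h (actA a m) = \sum_(q <- Delta h) actA (act q.1 a) (actH q.2 m).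
Proof. by case: HM. Qed.
Let unitA m : actA oneA m = m.
Proof. by case: HM. Qed.

Definition Fy (y : M) := S3 phi (fun X1 X2 X3 => S2 (Delta t) (fun t1 t2 =>
   S3 phiinv (fun x1 x2 x3 => actH (X1 * t1) (actA (act x1 a0)
      (actH (x2 * beta * S x3 * S (Sinv (alpha * X3) * X2 * t2)) y))))).

Lemma Fy_id y : Fy y = y.
Proof.
have lS := S_lin hq.
pose q2 X2 X3 := Sinv (alpha * X3) * X2.
pose B X2 X3 k1 k2 c d := actA (act (k1 * c) a0) (actH (k2 * d * S (q2 X2 X3)) y).
have mB X2 X3 k1 k2 : ml2 (B X2 X3 k1 k2).
  split => x; rewrite /B.
    exact: (lin_comp (lA' _) (lin_comp (Hmod_r actA1 _) (lin_mull _))).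
  exact: (lin_comp (lA _) (lin_comp (Hmod_r HMH _) (lin_comp (lin_mulr _) (lin_mull _)))).
transitivity (S3 phi (fun X1 X2 X3 => S2 (Delta X1) (fun k1 k2 => S2 (Delta t) (fun t1 t2 =>
   S2 (Delta t1) (fun s1 s2 => S3 phiinv (fun x1 x2 x3 =>
      B X2 X3 k1 k2 (s1 * x1) (s2 * x2 * beta * S x3 * S t2))))))).
  rewrite /Fy; apply: S3_ext => X1 X2 X3.
  transitivity (S2 (Delta t) (fun t1 t2 => S3 phiinv (fun x1 x2 x3 => S2 (Delta X1) (fun k1 k2 =>
     S2 (Delta t1) (fun s1 s2 => B X2 X3 k1 k2 (s1 * x1) (s2 * x2 * beta * S x3 * S t2)))))).
    apply: S2_ext => t1 t2; apply: S3_ext => x1 x2 x3.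
    set w := actH _ y.
    transitivity (S2 (Delta (X1 * t1)) (fun c1 c2 => actA (act c1 (act x1 a0)) (actH c2 w))).
      exact: compat.
    rewrite (DeltaM hq); last first.
      split => z.
        exact: (lin_comp (lA' _) (Hmod_r actA1 _)).
      exact: (lin_comp (lA _) (Hmod_r HMH _)).
    apply: S2_ext => k1 k2; apply: S2_ext => s1 s2.
    rewrite /B /w -(Hmod_M actA1) -(Hmod_M HMH) !mulrA; congr (actA _ (actH _ y)).
    by rewrite /q2 (SM hq) !mulrA.
  transitivity (S2 (Delta t) (fun t1 t2 => S2 (Delta X1) (fun k1 k2 => S3 phiinv (fun x1 x2 x3 =>
     S2 (Delta t1) (fun s1 s2 => B X2 X3 k1 k2 (s1 * x1) (s2 * x2 * beta * S x3 * S t2)))))).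
    by apply: S2_ext => t1 t2; rewrite S3S2.
  rewrite S2S2; apply: S2_ext => k1 k2; apply: S2_ext => t1 t2; by rewrite S3S2.
transitivity (S3 phi (fun X1 X2 X3 => S2 (Delta X1) (fun k1 k2 =>
      S3 phiinv (fun x1 x2 x3 => B X2 X3 k1 k2 (x1 * t) (x2 * beta * S x3))))).
  by apply: S3_ext => X1 X2 X3; apply: S2_ext => k1 k2; rewrite (P1 hq).
transitivity (S3 phi (fun X1 X2 X3 => S2 (Delta X1) (fun k1 k2 =>
      eps k1 *: actH (k2 * beta * S (q2 X2 X3)) y))).
  apply: S3_ext => X1 X2 X3; apply: S2_ext => k1 k2.
  transitivity (S3 phiinv (fun x1 x2 x3 => eps x1 *: (eps k1 *: actH (k2 * x2 * beta * S x3 * S (q2 X2 X3)) y))).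
    apply: S3_ext => x1 x2 x3; rewrite /B !mulrA (Hmod_M actA1 (k1 * x1)) ha0 act_one.
    by rewrite (linZ (lA' _)) unitA (epsM hq) scalerA mulrC.
  rewrite (normInv hq (B := fun b c => eps k1 *: actH (k2 * b * beta * S c * S (q2 X2 X3)) y)).
    by rewrite (S1 hq) !mulr1.
  split => x; apply: lin_scale.
    apply: (lin_ext (g := fun z => actH (k2 * z * (beta * S x * S (q2 X2 X3))) y)).
      by move=> z; rewrite !mulrA.
    exact: (lin_comp (Hmod_r HMH _) (lin_comp (lin_mulr _) (lin_mull _))).
  apply: (lin_ext (g := fun z => actH ((k2 * x * beta) * S z * S (q2 X2 X3)) y)) => //.
  exact: (lin_comp (Hmod_r HMH _) (lin_comp (lin_mulr _) (lin_comp (lin_mull _) lS))).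
transitivity (S3 phi (fun X1 X2 X3 => actH (X1 * beta * S (q2 X2 X3)) y)).
  apply: S3_ext => X1 X2 X3; rewrite (cuR hq) //.
  exact: (lin_comp (Hmod_r HMH _) (lin_comp (lin_mulr _) (lin_mulr _))).
rewrite -(S3_lin (f := fun h => actH h y)); last exact: (Hmod_r HMH).
rewrite -[y in RHS](Hmod_1 HMH) -(axB hq) /S3; congr (actH _ y); apply: eq_bigr => p _.
by rewrite /q2 (SM hq) SiK !mulrA.
Qed.

Lemma hopf_inj : injective_Hmod actH.
Proof.
move=> M' N actM actN i f HM' HN [li iH] ii [lf fH].
have [g0 [lg0 g0i]] := ExtM.vs_ext li lf ii.
have lS := S_lin hq.
pose Phi n u w := S3 phiinv (fun x1 x2 x3 => actH u (actA (act x1 a0) (g0 (actN (x2 * beta * S x3 * w) n)))).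
have mPhi n : ml2 (Phi n).
  split => z; rewrite /Phi /S3; apply: lin_sumF => p.
    exact: (Hmod_r HMH _).
  exact: (lin_comp (Hmod_l HMH _) (lin_comp (lA _) (lin_comp lg0 (lin_comp (Hmod_r HN _) (lin_mull _))))).
pose g n := S3 phi (fun X1 X2 X3 => S2 (Delta t) (fun t1 t2 => Phi n (X1 * t1) (S (Sinv (alpha * X3) * X2 * t2)))).
exists g; split; first split.
- move=> c x y; rewrite /g /S3 scaler_sumr -big_split; apply: eq_bigr => p _.
  rewrite /S2 scaler_sumr -big_split; apply: eq_bigr => q _.
  rewrite /Phi /S3 scaler_sumr -big_split; apply: eq_bigr => r _ /=.
  by rewrite (Hmod_l HN) lg0 (lA _) (Hmod_l HMH).
- move=> h n; rewrite /g.
  transitivity (S3 phi (fun X1 X2 X3 => S2 (Delta t) (fun t1 t2 => Phi n (X1 * t1) (S (Sinv (alpha * X3) * X2 * t2) * h)))).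
    apply: S3_ext => *; apply: S2_ext => *; rewrite /Phi; apply: S3_ext => *.
    by rewrite -(Hmod_M HN) !mulrA.
  rewrite (Casimir hq SiK h (mPhi n) lt) (S3_lin (f := actH h)); last exact: (Hmod_l HMH).
  apply: S3_ext => X1 X2 X3; rewrite (S2_lin (f := actH h)); last exact: (Hmod_l HMH).
  apply: S2_ext => t1 t2; rewrite /Phi (S3_lin (f := actH h)); last exact: (Hmod_l HMH).
  by apply: S3_ext => *; rewrite -[h * X1 * t1]mulrA (Hmod_M HMH).
- move=> m; rewrite -[f m]Fy_id /g /Fy; apply: S3_ext => *; apply: S2_ext => *; rewrite /Phi.
  by apply: S3_ext => *; rewrite -iH g0i fH.
Qed.
End Hopf.
End Main.


Lemma linfunE' (k : fieldType) (H : falgType k) (F : H -> k^o) : lin F -> forall g, linfun F g = F g.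
Proof.
move=> lF g.
pose L : {linear H -> k^o} := HB.pack F (GRing.isLinear.Build _ _ _ _ F lF).
by have := lfunE L g.
Qed.

Lemma lin_hom (k : fieldType) (H : falgType k) (f : 'Hom(H, k^o)) h : lin (fun g : H => f (g * h)).
Proof. by move=> c x y; rewrite mulrDl -scalerAl linearD linearZ. Qed.

Lemma harpE (k : fieldType) (H : falgType k) h (f : 'Hom(H, k^o)) x : harp h f x = f (x * h).
Proof. by rewrite /harp linfunE' //; apply: lin_hom. Qed.

Section Fin.
Variables (k : fieldType) (H : falgType k) (Delta : H -> seq (H * H)) (eps : H -> k)
  (phi phiinv : seq (H * H * H)) (S Sinv : H -> H) (alpha beta t : H)
  (A : lmodType k) (act : H -> A -> A) (mulA : A -> A -> A) (oneA : A).
Hypothesis hq : quasiHopf Delta eps phi phiinv S alpha beta.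
Hypotheses (SK : cancel S Sinv) (SiK : cancel Sinv S).
Hypothesis lt : left_integral eps t.
Hypothesis tne : t != 0.
Hypothesis hA : module_algebra Delta eps phi act mulA oneA.

Let el := eps_lin hq.
Let HA := actA1 hA.
Let lm1 a : lin (mulA a). Proof. by case: hA => _ [l _] _ _ _ c x y; exact: l. Qed.
Let lm2 b : lin (mulA^~ b). Proof. by case: hA => _ [_ [l _]] _ _ _ c x y; exact: l. Qed.
Let mcompat h a b : act h (mulA a b) = \sum_(q <- Delta h) mulA (act q.1 a) (act q.2 b).
Proof. by case: hA. Qed.
Let mone a : mulA a oneA = a.
Proof. by case: hA => _ [_ [_ [_ l]]] _ _ _. Qed.

Lemma epsS h : eps (S h) = eps h.
Proof.
have e := congr1 eps (antA hq h).
rewrite (lin_sum el) (linZ el) (epsA hq) in e.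
have e' : \sum_(i <- Delta h) eps (S i.1 * alpha * i.2) = eps h by rewrite e; exact: mulr1.
rewrite -e' -{1}(cu1 hq h) (lin_sum (lin_comp el (S_lin hq))); apply: eq_bigr => p _.
by rewrite (linZ (lin_comp el (S_lin hq))) !(epsM hq) (epsA hq) mulr1 mulrC.
Qed.
Lemma epsSinv x : eps (Sinv x) = eps x.
Proof. by rewrite -{2}(SiK x) epsS. Qed.

Lemma sum_eps_act (s : seq (H * H)) b (a : A) :
  \sum_(q <- s) mulA (act q.1 b) (act q.2 a) = \sum_(q <- s) mulA (eps q.1 *: b) (act q.2 a) ->
  \sum_(q <- s) mulA (act q.1 b) (act q.2 a) = mulA b (act (\sum_(q <- s) eps q.1 *: q.2) a).
Proof.
move=> ->; rewrite (lin_sum (Hmod_r HA a)) (lin_sum (lm1 b)); apply: eq_bigr => q _.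
by rewrite (linZ (lm2 _)) (linZ (Hmod_r HA a)) (linZ (lm1 b)).
Qed.

Lemma p3p1 : (exists a, act t a = oneA) -> morita_surjective eps phi Sinv beta t act mulA.
Proof.
move=> [a0 ha0] b hb; exists [:: (b, a0)]; rewrite big_seq1 /=.
rewrite sum_eps_act; last by apply: eq_bigr => q _; rewrite hb.
have -> : \sum_(q <- p_L phi Sinv beta) eps q.1 *: q.2 = 1.
  rewrite /p_L big_map /=.
  transitivity (S3 phi (fun a b c => eps b *: (eps a *: c))).
    apply: eq_bigr => p _; rewrite scalerA (epsM hq) epsSinv (epsM hq) (epsB hq) mulr1 mulrC //.
  rewrite (normM hq) ?(eps1 hq) ?scale1r //.
  split => x; [exact: lin_scalef el| by move=> c x1 y1; rewrite scalerDr !scalerA mulrC].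
rewrite (Hmod_1 HA) mcompat sum_eps_act; last by apply: eq_bigr => q _; rewrite hb.
by rewrite (cu2 hq) ha0 mone.
Qed.

Lemma p1p3 : morita_surjective eps phi Sinv beta t act mulA -> exists a, act t a = oneA.
Proof.
move=> ms; have [s e] := ms oneA (act_one hA).
exists (\sum_(x <- s) \sum_(q <- p_L phi Sinv beta) mulA (act q.1 x.1) (act q.2 x.2)).
by rewrite (lin_sum (Hmod_l HA t)) -e.
Qed.

Lemma p5p4 : (forall (M : lmodType k) (actH : H -> M -> M) (actA : A -> M -> M),
         HA_hopf_module Delta eps phi mulA oneA act actH actA -> injective_Hmod actH) ->
   injective_Hmod act.
Proof.
move=> h5; apply: (h5 A act mulA).
case: hA => ha [l1 [l2 [u1 u2]]] asc co un; split => //.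
Qed.

Lemma p2p3 : (exists Phi : 'Hom(H, k^o) -> A, total_integral eps act oneA Phi) -> exists a, act t a = oneA.
Proof.
move=> [Phi [lP hP eP]].
pose e := vbasis (fullv : {vspace H}).
have [i0 hi] : exists i, coord e i t != 0.
  apply/existsP; apply: contraNT tne; rewrite negb_exists => /forallP az.
  rewrite (coord_vbasis (memvf t)) big1 // => i _.
  by have := az i; rewrite negbK => /eqP ->; rewrite scale0r.
pose l := linfun (fun g : H => (coord e i0 t)^-1 * coord e i0 g : k^o).
have ll : lin (fun g : H => (coord e i0 t)^-1 * coord e i0 g : k^o).
  by move=> c x y; rewrite linearD linearZ /= mulrDr; congr (_ + _); rewrite /GRing.scale /= mulrCA.
exists (Phi l); rewrite -hP -eP; congr (Phi _); apply/lfunP => x.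
rewrite harpE !linfunE' // lt linearZ /= mulrCA mulVf // mulr1 //.
Qed.

Lemma p4p2 : injective_Hmod act -> exists Phi : 'Hom(H, k^o) -> A, total_integral eps act oneA Phi.
Proof.
move=> inj.
pose actM (h : H) (c : k^o) : k^o := eps h * c.
pose i (c : k^o) : 'Hom(H, k^o) := c *: linfun (eps : H -> k^o).
pose f (c : k^o) : A := c *: oneA.
have epsE x : linfun (eps : H -> k^o) x = eps x by rewrite linfunE'.
have HM : is_Hmod actM.
  split.
  - by move=> h c x y; rewrite /actM mulrDr; congr (_ + _); rewrite /GRing.scale /= mulrCA.
  - by move=> c h g m; rewrite /actM (el c h g) mulrDl; congr (_ + _); rewrite /GRing.scale /= mulrA.
  - by move=> h g m; rewrite /actM (epsM hq) mulrA.
  - by move=> m; rewrite /actM (eps1 hq) mul1r.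
have HN : is_Hmod (@harp _ H).
  split.
  - by move=> h c x y; apply/lfunP => z; rewrite harpE !add_lfunE !scale_lfunE !harpE.
  - by move=> c h g m; apply/lfunP => z; rewrite harpE !add_lfunE !scale_lfunE !harpE mulrDr linearD -scalerAr linearZ.
  - by move=> h g m; apply/lfunP => z; rewrite !harpE mulrA.
  - by move=> m; apply/lfunP => z; rewrite harpE mulr1.
have Hi : is_Hlin actM (@harp _ H) i.
  split; first by move=> c x y; rewrite /i scalerDl scalerA.
  move=> h c; apply/lfunP => z; rewrite harpE /i /actM !scale_lfunE !epsE (epsM hq).
  by change ((eps h * c) * eps z = c * (eps z * eps h) :> k); ring.
have Hf : is_Hlin actM act f.
  split; first by move=> c x y; rewrite /f scalerDl scalerA.
  by move=> h c; rewrite /f (linZ (Hmod_l HA h)) (act_one hA) scalerA /actM mulrC.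
have ii : injective i.
  move=> c c' /lfunP /(_ 1); rewrite /i !scale_lfunE !epsE (eps1 hq).
  by rewrite /GRing.scale /= !mulr1.
have [g [[lg hg] gi]] := inj _ _ _ _ i f HM HN Hi ii Hf.
exists g; split => //.
by have := gi 1; rewrite /i /f !scale1r.
Qed.
End Fin.

Theorem mainTheorem7 (k : fieldType) (H : falgType k)
  (Delta : H -> seq (H * H)) (eps : H -> k) (phi phiinv : seq (H * H * H))
  (S Sinv : H -> H) (alpha beta t : H)
  (A : lmodType k) (act : H -> A -> A) (mulA : A -> A -> A) (oneA : A) :
  quasiHopf Delta eps phi phiinv S alpha beta ->
  cancel S Sinv -> cancel Sinv S ->
  left_integral eps t -> t != 0 ->
  module_algebra Delta eps phi act mulA oneA ->
  [<-> morita_surjective eps phi Sinv beta t act mulA;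
       exists Phi : 'Hom(H, k^o) -> A, total_integral eps act oneA Phi;
       exists a : A, act t a = oneA;
       injective_Hmod act;
       forall (M : lmodType k) (actH : H -> M -> M) (actA : A -> M -> M),
         HA_hopf_module Delta eps phi mulA oneA act actH actA ->
         injective_Hmod actH].
Proof.
move=> hq SK SiK lt tne hA.
have h35 : (exists a, act t a = oneA) -> forall (M : lmodType k) (actH : H -> M -> M) (actA : A -> M -> M),
         HA_hopf_module Delta eps phi mulA oneA act actH actA -> injective_Hmod actH.
  by move=> [a0 ha0] M actH actA HM; exact: (hopf_inj hq SiK lt hA ha0 HM).
have h54 := p5p4 hA.
have h42 := p4p2 hq hA.
have h23 := p2p3 hq lt tne.
have h31 := p3p1 hq SiK hA.
have h13 := p1p3 hA.
tfae.
- by move=> /h13 /h35 /h54 /h42.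
- exact: h23.
- by move=> /h35 /h54.
- by move=> /h42 /h23 /h35.
- by move=> /h54 /h42 /h23 /h31.
Qed.
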